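(* Let $(f^*,g^* )$ be a stationary $\hat\alpha$-discounted Nash equilibrium of a two-player continuous time stochastic game for some $\hat\alpha>0$, with $\|\mu\|>0$, and suppose: (M1) $(f^*,g^* )$ is pure, i.e. for each $s\in S$ there are $a^1_s\in A^1(s)$, $a^2_s\in A^2(s)$ with $f^*(s,a^1_s)=1$, $g^*(s,a^2_s)=1$; (M2) there exist $p_s\ge0$ with $\sum_{s\in S}p_s=1$ such that $Q(f^*,g^* )_{ss'}=\|\mu\|\,(p_{s'}-\delta(s,s'))$ for all $s,s'\in S$; (M3) for all $s\in S$, $a^1\in A^1(s)$: $\sum_{s'}p_{s'}r^1(s',a^1_{s'},a^2_{s'})\ge\sum_{s'}\left(\frac{\mu(s',s,a^1,a^2_s)}{\|\mu\|}+\delta(s,s')\right)r^1(s',a^1_{s'},a^2_{s'})$, and for all $s\in S$, $a^2\in A^2(s)$: $\sum_{s'}p_{s'}r^2(s',a^1_{s'},a^2_{s'})\ge\sum_{s'}\left(\frac{\mu(s',s,a^1_s,a^2)}{\|\mu\|}+\delta(s,s')\right)r^2(s',a^1_{s'},a^2_{s'})$. Then $(f^*,g^* )$ is a Blackwell-Nash equilibrium.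
   Context: A two-player continuous time stochastic game consists of a finite state set $S$, finite nonempty action sets $A^1(s),A^2(s)$, reward rates $r^i(s,a^1,a^2)$ ($i=1,2$), and transition rates $\mu(s',s,a^1,a^2)\ge0$ from $s$ to $s'\ne s$, with $\mu(s,s,a^1,a^2)=-\sum_{s'\ne s}\mu(s',s,a^1,a^2)$. Let $\|\mu\|=\max_{s,a^1,a^2}\sum_{s'\ne s}\mu(s',s,a^1,a^2)$ and let $\delta(s,s')$ be the Kronecker delta. Stationary strategies $f,g$ assign to each state a probability distribution on $A^1(s)$, resp. $A^2(s)$. For a stationary pair, $r^i(s,f,g)=\sum_{a^1,a^2}f(s,a^1)g(s,a^2)r^i(s,a^1,a^2)$ and $Q(f,g)$ is the generator matrix with $Q(f,g)_{ss'}=\sum_{a^1,a^2}f(s,a^1)g(s,a^2)\mu(s',s,a^1,a^2)$. For $\alpha>0$ the $\alpha$-discounted payoff is $v^i_\alpha(f,g)=(\alpha I-Q(f,g))^{-1}r^i(f,g)$ (equivalently $E^s_{f,g}\int_0^\infty e^{-\alpha t}r^i(s_t,f,g)dt$). A stationary pair $(f^*,g^* )$ is an $\alpha$-discounted Nash equilibrium if for all $s$, $v^1_\alpha(s,f^*,g^* )\ge v^1_\alpha(s,f,g^* )$ for all stationary $f$ and $v^2_\alpha(s,f^*,g^* )\ge v^2_\alpha(s,f^*,g)$ for all stationary $g$. It is a Blackwell-Nash equilibrium (BNE) if there is $\alpha_0>0$ such that it is an $\alpha$-discounted Nash equilibrium for all $\alpha\in(0,\alpha_0]$. *)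

(* Defs.v *)
From HB Require Import structures.
From mathcomp Require Import all_boot all_order all_algebra.
Set Implicit Arguments. Unset Strict Implicit. Unset Printing Implicit Defensive.
Import Order.TTheory GRing.Theory Num.Theory.
Local Open Scope ring_scope.

Section Game.
Variables (R : realFieldType) (n : nat) (A1 A2 : finType).
Variables (As1 : 'I_n -> {set A1}) (As2 : 'I_n -> {set A2}).
(* off-diagonal transition rates: mu s' s a1 a2 = rate from s to s' (s' <> s);
   the value for s' = s is ignored and replaced as in the paper *)
Variable mu : 'I_n -> 'I_n -> A1 -> A2 -> R.

Definition delta (s s' : 'I_n) : R := if s == s' then 1 else 0.

Definition muf (s' s : 'I_n) (a1 : A1) (a2 : A2) : R :=
  if s' == s then - \sum_(t < n | t != s) mu t s a1 a2 else mu s' s a1 a2.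

Definition normmu : R :=
  \big[Num.max/0]_(s < n) \big[Num.max/0]_(a1 in As1 s)
     \big[Num.max/0]_(a2 in As2 s) \sum_(t < n | t != s) mu t s a1 a2.

Definition is_strat1 (f : 'I_n -> A1 -> R) : Prop :=
  forall s, (forall a, 0 <= f s a) /\ (forall a, a \notin As1 s -> f s a = 0)
            /\ \sum_(a in As1 s) f s a = 1.
Definition is_strat2 (g : 'I_n -> A2 -> R) : Prop :=
  forall s, (forall a, 0 <= g s a) /\ (forall a, a \notin As2 s -> g s a = 0)
            /\ \sum_(a in As2 s) g s a = 1.

Definition rew (r : 'I_n -> A1 -> A2 -> R) (f : 'I_n -> A1 -> R)
  (g : 'I_n -> A2 -> R) (s : 'I_n) : R :=
  \sum_(a1 in As1 s) \sum_(a2 in As2 s) f s a1 * g s a2 * r s a1 a2.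

Definition Qgen (f : 'I_n -> A1 -> R) (g : 'I_n -> A2 -> R) : 'M[R]_n :=
  \matrix_(s, s') \sum_(a1 in As1 s) \sum_(a2 in As2 s)
      f s a1 * g s a2 * muf s' s a1 a2.

Definition vdisc (r : 'I_n -> A1 -> A2 -> R) (alpha : R)
  (f : 'I_n -> A1 -> R) (g : 'I_n -> A2 -> R) (s : 'I_n) : R :=
  (invmx (alpha%:M - Qgen f g) *m (\col_(t < n) rew r f g t)) s 0.

Definition disc_nash (r1 r2 : 'I_n -> A1 -> A2 -> R) (alpha : R)
  (f : 'I_n -> A1 -> R) (g : 'I_n -> A2 -> R) : Prop :=
  forall s,
    (forall f', is_strat1 f' -> vdisc r1 alpha f' g s <= vdisc r1 alpha f g s) /\
    (forall g', is_strat2 g' -> vdisc r2 alpha f g' s <= vdisc r2 alpha f g s).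

Definition blackwell_nash (r1 r2 : 'I_n -> A1 -> A2 -> R)
  (f : 'I_n -> A1 -> R) (g : 'I_n -> A2 -> R) : Prop :=
  exists2 alpha0 : R, 0 < alpha0 &
    forall alpha : R, 0 < alpha -> alpha <= alpha0 -> disc_nash r1 r2 alpha f g.

End Game.

(* Main.v *)
Require Import Defs.
From HB Require Import structures.
From mathcomp Require Import all_boot all_order all_algebra.
Import Order.TTheory GRing.Theory Num.Theory.
Local Open Scope ring_scope.
From mathcomp Require Import ring lra.
Set Implicit Arguments. Unset Strict Implicit.

Section Mx.
Variables (R : realFieldType) (n : nat).

Definition gen (Q : 'M[R]_n) := (forall s s', s != s' -> 0 <= Q s s') /\
   (forall s, \sum_t Q s t = 0).

Lemma mulE (a : R) (Q : 'M[R]_n) (x : 'cV[R]_n) s :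
  ((a%:M - Q) *m x) s 0 = a * x s 0 - \sum_t Q s t * x t 0.
Proof. by rewrite mulmxBl mul_scalar_mx !mxE. Qed.

Lemma minp Q (a : R) (x : 'cV[R]_n) : gen Q -> 0 < a ->
  (forall s, 0 <= ((a%:M - Q) *m x) s 0) -> forall s, 0 <= x s 0.
Proof.
move=> [Qo Qs] a0 H s.
case: (@arg_minP _ _ _ s predT (fun i => x i 0)) => // i _ Hi.
have Hs : x i 0 <= x s 0 by exact: Hi.
suff : 0 <= x i 0 by move=> h; apply: le_trans h Hs.
have := H i; rewrite mulE.
have -> : \sum_t Q i t * x t 0 = \sum_t Q i t * (x t 0 - x i 0) + (\sum_t Q i t) * x i 0.
  by rewrite big_distrl /= -big_split /=; apply: eq_bigr => t _; ring.
rewrite Qs mul0r addr0.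
have : 0 <= \sum_t Q i t * (x t 0 - x i 0).
  apply: sumr_ge0 => t _; case: (eqVneq i t) => [->|ne]; first by rewrite subrr mulr0.
  by apply: mulr_ge0; [exact: Qo| rewrite subr_ge0; exact: Hi].
move=> h1 h2.
have : 0 <= a * x i 0 by lra.
by rewrite pmulr_rge0.
Qed.

Lemma unitp Q (a : R) : gen Q -> 0 < a -> (a%:M - Q) \in unitmx.
Proof.
move=> gQ a0.
rewrite -unitmx_tr -row_free_unit -kermx_eq0.
set K := kermx _.
have HK := mulmx_ker ((a%:M - Q)^T).
apply/eqP/matrixP => i j; rewrite mxE.
set u := (row i K)^T.
have Hu : (a%:M - Q) *m u = 0.
  by rewrite /u -[a%:M - Q]trmxK -trmx_mul -row_mul HK row0 trmx0.
have h1 := minp gQ a0 (x := u).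
have h2 := minp gQ a0 (x := - u).
rewrite Hu in h1; rewrite mulmxN Hu oppr0 in h2.
have e1 : 0 <= u j 0 by apply: h1 => s; rewrite mxE.
have e2 : 0 <= (- u) j 0 by apply: h2 => s; rewrite mxE.
move: e1 e2; rewrite /u !mxE => e1 e2; lra.
Qed.


Lemma suffl Q (a : R) (r u : 'cV[R]_n) : gen Q -> 0 < a ->
  (forall t, r t 0 <= a * u t 0 - \sum_t' Q t t' * u t' 0) ->
  forall t, (invmx (a%:M - Q) *m r) t 0 <= u t 0.
Proof.
move=> gQ a0 H t.
have uM := unitp gQ a0.
set v := invmx _ *m r.
have Hv : (a%:M - Q) *m v = r by rewrite /v mulKVmx.
have := minp gQ a0 (x := u - v).
rewrite mulmxBr Hv => h.
have : 0 <= (u - v) t 0.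
  apply: h => s.
  have -> : ((a%:M - Q) *m u - r) s 0 = ((a%:M - Q) *m u) s 0 - r s 0 by rewrite mxE [X in _ + X]mxE.
  rewrite mulE.
  by have := H s; lra.
by rewrite !mxE subr_ge0.
Qed.

Lemma necl Q (a : R) (r u : 'cV[R]_n) s : gen Q -> 0 < a ->
  (forall t, t != s -> r t 0 = a * u t 0 - \sum_t' Q t t' * u t' 0) ->
  (forall t, (invmx (a%:M - Q) *m r) t 0 <= u t 0) ->
  r s 0 <= a * u s 0 - \sum_t' Q s t' * u t' 0.
Proof.
move=> gQ a0 H Hle.
rewrite leNgt; apply/negP => hd.
have uM := unitp gQ a0.
pose v := invmx (a%:M - Q) *m r.
have Hv : (a%:M - Q) *m v = r by rewrite /v mulKVmx.
have Mx : forall t, ((a%:M - Q) *m (v - u)) t 0 = r t 0 - (a * u t 0 - \sum_t' Q t t' * u t' 0).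
  by move=> t; rewrite mulmxBr Hv mxE [X in _ + X]mxE mulE.
have h := minp gQ a0 (x := v - u).
have x0 : v - u = 0.
  apply/matrixP => i j; rewrite (ord1 j) [RHS]mxE.
  apply/eqP; rewrite eq_le; apply/andP; split.
    rewrite mxE [X in _ + X]mxE subr_le0; exact: Hle.
  apply: h => t; rewrite Mx; case: (eqVneq t s) => [->|ne]; first by lra.
  by rewrite H // subrr.
have := Mx s; rewrite x0 mulmx0 mxE; lra.
Qed.

End Mx.

Section G.
Variables (R : realFieldType) (n : nat) (A1 A2 : finType).
Variables (As1 : 'I_n -> {set A1}) (As2 : 'I_n -> {set A2}).
Variable mu : 'I_n -> 'I_n -> A1 -> A2 -> R.
Hypothesis hmu : forall s' s a1 a2, s' != s -> 0 <= mu s' s a1 a2.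

Lemma muf_sum s a1 a2 : \sum_s' muf mu s' s a1 a2 = 0.
Proof.
rewrite (bigD1 s) //= /muf eqxx.
rewrite [X in _ + X](eq_bigr (fun t => mu t s a1 a2)); last first.
  by move=> t /negbTE ->.
by rewrite addNr.
Qed.

Lemma muf_off s' s a1 a2 : s' != s -> 0 <= muf mu s' s a1 a2.
Proof. by move=> ne; rewrite /muf (negbTE ne); apply: hmu. Qed.

Lemma pure_sum (A : finType) (As : 'I_n -> {set A}) (f : 'I_n -> A -> R) s a0
  (h : A -> R) :
  (forall a, 0 <= f s a) -> \sum_(a in As s) f s a = 1 -> a0 \in As s ->
  f s a0 = 1 -> \sum_(a in As s) f s a * h a = h a0.
Proof.
move=> f0 fs1 ain fa0.
rewrite (bigD1 a0) //= fa0 mul1r.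
rewrite (bigD1 a0) //= fa0 in fs1.
have : \sum_(a in As s | a != a0) f s a = 0 by lra.
move/psumr_eq0P => hz.
rewrite big1 ?addr0 // => a /andP [ha hne].
by rewrite hz ?mul0r // ha.
Qed.


Lemma Qgen_gen (f : 'I_n -> A1 -> R) (g : 'I_n -> A2 -> R) :
  is_strat1 As1 f -> is_strat2 As2 g -> gen (Qgen As1 As2 mu f g).
Proof.
move=> hf hg; split.
  move=> s s' ne; rewrite mxE; apply: sumr_ge0 => a1 _; apply: sumr_ge0 => a2 _.
  have [f0 _] := hf s; have [g0 _] := hg s.
  by apply: mulr_ge0; [apply: mulr_ge0|apply: muf_off; rewrite eq_sym].
move=> s.
rewrite (eq_bigr (fun s' => \sum_(a1 in As1 s) \sum_(a2 in As2 s)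
      f s a1 * g s a2 * muf mu s' s a1 a2)); last by move=> t _; rewrite mxE.
rewrite exchange_big /=; apply: big1 => a1 _.
rewrite exchange_big /=; apply: big1 => a2 _.
by rewrite -big_distrr /= muf_sum mulr0.
Qed.

Lemma Qgen_pure2 (f : 'I_n -> A1 -> R) (g : 'I_n -> A2 -> R) (a2s : 'I_n -> A2) s s' :
  is_strat2 As2 g -> a2s s \in As2 s -> g s (a2s s) = 1 ->
  Qgen As1 As2 mu f g s s' = \sum_(a1 in As1 s) f s a1 * muf mu s' s a1 (a2s s).
Proof.
move=> hg ain g1; rewrite mxE; apply: eq_bigr => a1 _.
have [g0 [_ gs1]] := hg s.
rewrite -(pure_sum (muf mu s' s a1) g0 gs1 ain g1) big_distrr /=.
by apply: eq_bigr => a2 _; rewrite mulrA.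
Qed.

Lemma rew_pure2 r (f : 'I_n -> A1 -> R) (g : 'I_n -> A2 -> R) (a2s : 'I_n -> A2) s :
  is_strat2 As2 g -> a2s s \in As2 s -> g s (a2s s) = 1 ->
  rew As1 As2 r f g s = \sum_(a1 in As1 s) f s a1 * r s a1 (a2s s).
Proof.
move=> hg ain g1; rewrite /rew; apply: eq_bigr => a1 _.
have [g0 [_ gs1]] := hg s.
rewrite -(pure_sum (r s a1) g0 gs1 ain g1) big_distrr /=.
by apply: eq_bigr => a2 _; rewrite mulrA.
Qed.

End G.

Section P1.
Variables (R : realFieldType) (n : nat) (A1 A2 : finType).
Variables (As1 : 'I_n -> {set A1}) (As2 : 'I_n -> {set A2}).
Variable mu : 'I_n -> 'I_n -> A1 -> A2 -> R.
Hypothesis hmu : forall s' s a1 a2, s' != s -> 0 <= mu s' s a1 a2.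
Variables (r1 : 'I_n -> A1 -> A2 -> R) (fs : 'I_n -> A1 -> R) (gs : 'I_n -> A2 -> R).
Hypotheses (hf : is_strat1 As1 fs) (hg : is_strat2 As2 gs).
Variables (alphah : R) (m : R).
Hypotheses (halpha : 0 < alphah) (m0 : 0 < m).
Hypothesis hn : forall s f', is_strat1 As1 f' ->
  vdisc As1 As2 mu r1 alphah f' gs s <= vdisc As1 As2 mu r1 alphah fs gs s.
Variables (a1s : 'I_n -> A1) (a2s : 'I_n -> A2).
Hypothesis hM1 : forall s, [/\ a1s s \in As1 s, a2s s \in As2 s,
                       fs s (a1s s) = 1 & gs s (a2s s) = 1].
Variables (p : 'I_n -> R).
Hypothesis hp1 : \sum_(s < n) p s = 1.
Hypothesis hM2 : forall s s', Qgen As1 As2 mu fs gs s s' = m * (p s' - @delta R n s s').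
Hypothesis hM3a : forall s a1, a1 \in As1 s ->
     \sum_(s' < n) (muf mu s' s a1 (a2s s) / m + @delta R n s s')
                   * r1 s' (a1s s') (a2s s')
     <= \sum_(s' < n) p s' * r1 s' (a1s s') (a2s s').

Let rs t := r1 t (a1s t) (a2s t).
Let pr := \sum_t p t * rs t.
Definition uu (al : R) : 'cV[R]_n := \col_t ((rs t + m / al * pr) / (al + m)).
Definition Dv al s a := al * uu al s 0 - \sum_t muf mu t s a (a2s s) * uu al t 0
   - r1 s a (a2s s).

Lemma rstar t : rew As1 As2 r1 fs gs t = rs t.
Proof.
have [i1 i2 f1 g1] := hM1 t.
have [f0 [_ fs1]] := hf t.
by rewrite (rew_pure2 As1 r1 fs hg i2 g1) (pure_sum _ f0 fs1 i1 f1).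
Qed.

Lemma sum_delta (F : 'I_n -> R) t : \sum_t' @delta R n t t' * F t' = F t.
Proof.
rewrite (bigD1 t) //= /delta eqxx mul1r big1 ?addr0 // => i ne.
by rewrite eq_sym (negbTE ne) mul0r.
Qed.

Lemma Mu al t : 0 < al ->
  al * uu al t 0 - \sum_t' Qgen As1 As2 mu fs gs t t' * uu al t' 0 = rs t.
Proof.
move=> a0.
rewrite (eq_bigr (fun t' => m * (p t' * uu al t' 0) - m * (@delta R n t t' * uu al t' 0)));
  last by move=> i _; rewrite hM2; ring.
rewrite sumrB -!big_distrr /= sum_delta.
rewrite (eq_bigr (fun t' => (p t' * rs t') / (al + m) + (m / al * pr) / (al + m) * p t'));
  last by move=> i _; rewrite mxE; ring.
rewrite big_split /= -big_distrl -big_distrr /= hp1 -/pr mxE.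
field.
by rewrite (lt0r_neq0 (addr_gt0 a0 m0)) (lt0r_neq0 a0).
Qed.

Lemma vstar al t : 0 < al -> vdisc As1 As2 mu r1 al fs gs t = uu al t 0.
Proof.
move=> a0; rewrite /vdisc.
have -> : \col_(t < n) rew As1 As2 r1 fs gs t = (al%:M - Qgen As1 As2 mu fs gs) *m uu al.
  apply/matrixP => i j; rewrite (ord1 j) [RHS]mulE Mu // mxE rstar //.
by rewrite mulKmx // (unitp (Qgen_gen hmu hf hg) a0).
Qed.

Lemma Dv_eq al s a : 0 < al -> Dv al s a =
  (al * (rs s - r1 s a (a2s s)) + m * pr - m * r1 s a (a2s s)
     - \sum_t muf mu t s a (a2s s) * rs t) / (al + m).
Proof.
move=> a0; rewrite /Dv.
rewrite (eq_bigr (fun t => (muf mu t s a (a2s s) * rs t) / (al + m)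
     + (m / al * pr) / (al + m) * muf mu t s a (a2s s)));
  last by move=> i _; rewrite mxE; ring.
rewrite big_split /= -big_distrl -big_distrr /= muf_sum // mxE.
field.
by rewrite (lt0r_neq0 (addr_gt0 a0 m0)) (lt0r_neq0 a0).
Qed.


Lemma Dv_nec s a : a \in As1 s -> 0 <= Dv alphah s a.
Proof.
move=> ain.
pose f' := fun t (b : A1) => if t == s then (if b == a then 1 else 0 : R) else fs t b.
have hf' : is_strat1 As1 f'.
  move=> t; rewrite /f'; case: (eqVneq t s) => [->|ne]; last exact: hf t.
  split; first by move=> b; case: (b == a).
  split; first by move=> b bn; case: eqP => // eb; rewrite eb ain in bn.
  rewrite (bigD1 a) //= eqxx big1 ?addr0 // => b /andP [_ /negbTE ->] //.
have [i1 i2 f1 g1] := hM1 s.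
have [f0 [_ fs1]] := hf' s.
have fa : f' s a = 1 by rewrite /f' !eqxx.
have Hne : forall t, t != s -> rew As1 As2 r1 f' gs t = rew As1 As2 r1 fs gs t /\
    forall t', Qgen As1 As2 mu f' gs t t' = Qgen As1 As2 mu fs gs t t'.
  by move=> t ne; rewrite /rew /f' /= (negbTE ne); split => // t'; rewrite !mxE /= (negbTE ne).
have := @necl R n (Qgen As1 As2 mu f' gs) alphah (\col_(t < n) rew As1 As2 r1 f' gs t)
   (uu alphah) s (Qgen_gen hmu hf' hg) halpha.
have Hi : forall t, t != s -> (\col_(t < n) rew As1 As2 r1 f' gs t) t 0 =
   alphah * uu alphah t 0 - \sum_t' Qgen As1 As2 mu f' gs t t' * uu alphah t' 0.
  move=> t ne; have [e1 e2] := Hne t ne.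
  rewrite mxE e1 rstar -(Mu t halpha).
  by congr (_ - _); apply: eq_bigr => t' _; rewrite e2.
move/(_ Hi).
have Hl : forall t, (invmx (alphah%:M - Qgen As1 As2 mu f' gs) *m
     \col_(t < n) rew As1 As2 r1 f' gs t) t 0 <= uu alphah t 0.
  by move=> t; rewrite -vstar //; exact: hn.
move/(_ Hl).
rewrite mxE (rew_pure2 As1 r1 f' hg i2 g1) (pure_sum _ f0 fs1 ain fa).
rewrite (eq_bigr (fun t' => muf mu t' s a (a2s s) * uu alphah t' 0)); last first.
  by move=> t' _; rewrite (Qgen_pure2 As1 mu f' t' hg i2 g1) (pure_sum _ f0 fs1 ain fa).
rewrite /Dv; lra.
Qed.

Lemma Dv_pos al s a : 0 < al -> al <= alphah -> a \in As1 s -> 0 <= Dv al s a.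
Proof.
move=> a0 ale ain.
have h1 := Dv_nec ain.
rewrite Dv_eq // in h1; rewrite Dv_eq //.
have hm : 0 < alphah + m by rewrite addr_gt0.
have hm' : 0 < al + m by rewrite addr_gt0.
rewrite pmulr_lge0 ?invr_gt0 // in h1; rewrite pmulr_lge0 ?invr_gt0 //.
have h3 := hM3a ain.
have e : \sum_(s' < n) (muf mu s' s a (a2s s) / m + @delta R n s s') * r1 s' (a1s s') (a2s s')
   = (\sum_t muf mu t s a (a2s s) * rs t) / m + rs s.
  rewrite (eq_bigr (fun t => (muf mu t s a (a2s s) * rs t) / m + @delta R n s t * rs t));
    last by move=> t _; rewrite /rs; ring.
  by rewrite big_split /= -big_distrl sum_delta.
rewrite e -/pr in h3.
set S := \sum_t _ in h1 h3 *.
have h4 : S <= m * pr - m * rs s.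
  have : S / m <= pr - rs s by lra.
  by rewrite ler_pdivrMr // => h; lra.
set X := rs s - r1 s a (a2s s) in h1 *.
case: (lerP 0 X) => hX.
  have : 0 <= al * X by apply: mulr_ge0; lra.
  have : 0 <= m * X by exact: mulr_ge0 (ltW m0) hX.
  rewrite /X in hX *; lra.
have : alphah * X <= al * X by rewrite ler_nM2r //.
lra.
Qed.

Lemma p1_ok al s f' : 0 < al -> al <= alphah -> is_strat1 As1 f' ->
  vdisc As1 As2 mu r1 al f' gs s <= vdisc As1 As2 mu r1 al fs gs s.
Proof.
move=> a0 ale hf'.
rewrite vstar //.
apply: (suffl (Qgen_gen hmu hf' hg) a0) => t.
have [i1 i2 f1 g1] := hM1 t.
have [f0 [_ fs1]] := hf' t.
rewrite mxE (rew_pure2 As1 r1 f' hg i2 g1).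
rewrite (eq_bigr (fun t' => \sum_(b in As1 t) f' t b * (muf mu t' t b (a2s t) * uu al t' 0)));
  last first.
  by move=> t' _; rewrite (Qgen_pure2 As1 mu f' t' hg i2 g1) big_distrl; apply: eq_bigr => b _; rewrite mulrA.
rewrite exchange_big /=.
have : 0 <= \sum_(b in As1 t) f' t b * Dv al t b.
  by apply: sumr_ge0 => b bi; apply: mulr_ge0; [exact: f0| exact: Dv_pos].
rewrite /Dv.
rewrite (eq_bigr (fun b => f' t b * (al * uu al t 0) - f' t b * (\sum_t0 muf mu t0 t b (a2s t) * uu al t0 0) - f' t b * r1 t b (a2s t)));
  last by move=> b _; ring.
rewrite !sumrB -big_distrl /= fs1 mul1r.
rewrite (eq_bigr (fun b => \sum_t0 f' t b * (muf mu t0 t b (a2s t) * uu al t0 0)) (P := fun b => b \in As1 t));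
  last by move=> b _; rewrite big_distrr.
lra.
Qed.

End P1.

Section Swap.
Variables (R : realFieldType) (n : nat) (A1 A2 : finType).
Variables (As1 : 'I_n -> {set A1}) (As2 : 'I_n -> {set A2}).
Variable mu : 'I_n -> 'I_n -> A1 -> A2 -> R.

Lemma Qgen_swap (f : 'I_n -> A1 -> R) (g : 'I_n -> A2 -> R) :
  Qgen As2 As1 (fun t s b a => mu t s a b) g f = Qgen As1 As2 mu f g.
Proof.
apply/matrixP => i j; rewrite !mxE exchange_big /=.
apply: eq_bigr => a _; apply: eq_bigr => b _.
by rewrite /muf /= [g i b * f i a]mulrC.
Qed.

Lemma rew_swap (r : 'I_n -> A1 -> A2 -> R) (f : 'I_n -> A1 -> R) (g : 'I_n -> A2 -> R) s :
  rew As2 As1 (fun s b a => r s a b) g f s = rew As1 As2 r f g s.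
Proof.
rewrite /rew exchange_big /=.
apply: eq_bigr => a _; apply: eq_bigr => b _.
by rewrite [g s b * f s a]mulrC.
Qed.

Lemma vdisc_swap (r : 'I_n -> A1 -> A2 -> R) al (f : 'I_n -> A1 -> R) (g : 'I_n -> A2 -> R) s :
  vdisc As2 As1 (fun t s b a => mu t s a b) (fun s b a => r s a b) al g f s
  = vdisc As1 As2 mu r al f g s.
Proof.
rewrite /vdisc Qgen_swap.
have -> : \col_(t < n) rew As2 As1 (fun s b a => r s a b) g f t = \col_(t < n) rew As1 As2 r f g t.
  by apply/matrixP => i j; rewrite !mxE rew_swap.
by [].
Qed.

End Swap.

Unset Implicit Arguments.

Theorem theorem5 (R : realFieldType) (n : nat) (A1 A2 : finType)
  (As1 : 'I_n -> {set A1}) (As2 : 'I_n -> {set A2})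
  (mu : 'I_n -> 'I_n -> A1 -> A2 -> R) (r1 r2 : 'I_n -> A1 -> A2 -> R)
  (* well-formed game: nonempty action sets, nonnegative off-diagonal rates *)
  (hA1 : forall s, As1 s != set0) (hA2 : forall s, As2 s != set0)
  (hmu : forall s' s a1 a2, s' != s -> 0 <= mu s' s a1 a2)
  (fs : 'I_n -> A1 -> R) (gs : 'I_n -> A2 -> R)
  (hf : is_strat1 As1 fs) (hg : is_strat2 As2 gs)
  (alphah : R) (halpha : 0 < alphah)
  (hnash : disc_nash As1 As2 mu r1 r2 alphah fs gs)
  (hnorm : 0 < normmu As1 As2 mu)
  (* (M1) purity *)
  (a1s : 'I_n -> A1) (a2s : 'I_n -> A2)
  (hM1 : forall s, [/\ a1s s \in As1 s, a2s s \in As2 s,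
                       fs s (a1s s) = 1 & gs s (a2s s) = 1])
  (* (M2) *)
  (p : 'I_n -> R) (hp0 : forall s, 0 <= p s) (hp1 : \sum_(s < n) p s = 1)
  (hM2 : forall s s', Qgen As1 As2 mu fs gs s s' =
                      normmu As1 As2 mu * (p s' - @delta R n s s'))
  (* (M3) *)
  (hM3a : forall s a1, a1 \in As1 s ->
     \sum_(s' < n) (muf mu s' s a1 (a2s s) / normmu As1 As2 mu + @delta R n s s')
                   * r1 s' (a1s s') (a2s s')
     <= \sum_(s' < n) p s' * r1 s' (a1s s') (a2s s'))
  (hM3b : forall s a2, a2 \in As2 s ->
     \sum_(s' < n) (muf mu s' s (a1s s) a2 / normmu As1 As2 mu + @delta R n s s')
                   * r2 s' (a1s s') (a2s s')
     <= \sum_(s' < n) p s' * r2 s' (a1s s') (a2s s')) :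
  blackwell_nash As1 As2 mu r1 r2 fs gs.
Proof.
exists alphah => // al a0 ale s; split.
  move=> f' hf'.
  have hn1 : forall s f', is_strat1 As1 f' ->
    vdisc As1 As2 mu r1 alphah f' gs s <= vdisc As1 As2 mu r1 alphah fs gs s.
    by move=> s0 f0 h; exact: (proj1 (hnash s0) f0 h).
  exact: (p1_ok hmu hf hg halpha hnorm hn1 hM1 hp1 hM2 hM3a s a0 ale hf').
move=> g' hg'.
rewrite -!(vdisc_swap As1 As2 mu r2).
pose mu' := fun t s (b : A2) (a : A1) => mu t s a b.
pose r2' := fun s (b : A2) (a : A1) => r2 s a b.
have hmu' : forall (s' s : 'I_n) (b : A2) (a : A1), s' != s -> 0 <= mu' s' s b a.
  by move=> s' s0 b a ne; apply: hmu.
have hn' : forall s (g'' : 'I_n -> A2 -> R), is_strat1 As2 g'' ->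
  vdisc As2 As1 mu' r2' alphah g'' fs s <= vdisc As2 As1 mu' r2' alphah gs fs s.
  by move=> s0 g'' h; rewrite /mu' /r2' !(vdisc_swap As1 As2 mu r2); exact: (proj2 (hnash s0) g'' h).
have hM1' : forall s, [/\ a2s s \in As2 s, a1s s \in As1 s, gs s (a2s s) = 1 & fs s (a1s s) = 1].
  by move=> s0; have [? ? ? ?] := hM1 s0; split.
have hM2' : forall s s', Qgen As2 As1 mu' gs fs s s' =
                      normmu As1 As2 mu * (p s' - @delta R n s s').
  by move=> s0 s'; rewrite /mu' Qgen_swap.
have hg1 : is_strat1 As2 gs by exact: hg.
have hf2 : is_strat2 As1 fs by exact: hf.
have hg'1 : is_strat1 As2 g' by exact: hg'.
have hM3' : forall s b, b \in As2 s ->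
     \sum_(s' < n) (muf mu' s' s b (a1s s) / normmu As1 As2 mu + @delta R n s s')
                   * r2' s' (a2s s') (a1s s')
     <= \sum_(s' < n) p s' * r2' s' (a2s s') (a1s s').
  by move=> s0 b hb; exact: hM3b.
exact: (p1_ok hmu' hg1 hf2 halpha hnorm hn' hM1' hp1 hM2' hM3' s a0 ale hg'1).
Qed.
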